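(* Let $P=\{p_1,p_2,p_3,p_4\}$ and $Q=\{q_1,q_2,q_3,q_4\}$ be two 4-point subsets of the Riemann sphere $\widehat{\mathbb{C}}$, each in general position (its four points do not lie on a common generalized circle). Then $P$ and $Q$ are Möbius equivalent (there is a Möbius transformation mapping $P$ onto $Q$) if and only if their shapes have the same angles.
   Context: Generalized circles are circles and straight lines (the latter completed by $\infty$) in $\widehat{\mathbb{C}}$; any three distinct points lie on exactly one. For a 4-point set $P=\{p_1,\dots,p_4\}$ in general position and each $l\in\{1,2,3,4\}$, the curvilinear triangle $T_l$ has as vertices the three points $p_i$, $i\ne l$; its side joining $p_i$ and $p_j$ ($i,j\neq l$) is the arc, with endpoints $p_i,p_j$, of the generalized circle through $p_i,p_j,p_l$ that does not contain $p_l$. Each $T_l$ is regarded as an oriented curvilinear triangle, its vertices read in the positive (counterclockwise) orientation induced by the orientation of the sphere, and its angles are the angles at its three vertices taken in this cyclic order (when one point is $\infty$, the triangle on the three finite points is an ordinary Euclidean triangle, positively oriented, and the others are bounded by an arc and two rays). The four triangles $T_1,\dots,T_4$ have the same oriented angles, and the shape of $P$ is this oriented curvilinear triangle (with its cyclically ordered angles). ''The shapes have the same angles'' means the cyclically ordered triples of angles of the shapes of $P$ and $Q$ coincide up to cyclic permutation. *)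

(* Defs.v *)
From Stdlib Require Import Reals List.
From Coquelicot Require Import Coquelicot.
Import ListNotations.
Open Scope R_scope.

(** The Riemann sphere: [Some z] is the finite point z, [None] is infinity. *)
Definition sphere := option C.

Definition Ceq_dec (x y : C) : {x = y} + {x <> y}.
Proof.
  destruct x as [a b], y as [c d].
  destruct (Req_EM_T a c) as [H1|H1]; destruct (Req_EM_T b d) as [H2|H2];
    subst; [left; reflexivity | right | right | right]; intro H; inversion H; auto.
Defined.

Definition mobius_app (a b c d : C) (p : sphere) : sphere :=
  match p with
  | Some z => if Ceq_dec (c * z + d)%C 0%C then None
              else Some ((a * z + b) / (c * z + d))%C
  | None => if Ceq_dec c 0%C then None else Some (a / c)%C
  end.

Definition mobius_equivalent (P Q : list sphere) : Prop :=
  exists a b c d : C, (a * d - b * c)%C <> 0%C /\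
    (forall x, In x P -> In (mobius_app a b c d x) Q) /\
    (forall y, In y Q -> exists x, In x P /\ mobius_app a b c d x = y).

Definition on_circle (c : C) (r : R) (p : sphere) : Prop :=
  match p with Some z => Cmod (z - c)%C = r | None => False end.

Definition on_line (u : C) (s : R) (p : sphere) : Prop :=
  match p with Some z => Re (Cconj u * z)%C = s | None => True end.

Definition on_common_gcircle (P : list sphere) : Prop :=
  (exists (c : C) (r : R), 0 < r /\ List.Forall (on_circle c r) P) \/
  (exists (u : C) (s : R), u <> 0%C /\ List.Forall (on_line u s) P).

Definition general_position4 (p1 p2 p3 p4 : sphere) : Prop :=
  NoDup [p1; p2; p3; p4] /\ ~ on_common_gcircle [p1; p2; p3; p4].

(** Tangent vector, at the vertex [pi], of the arc with endpoints [pi], [pj]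
    of the generalized circle through [pi], [pj], [pl] that does not contain
    [pl] (pointing from [pi] into the arc).  At a finite vertex zi one uses
    the coordinate w = 1/(z - zi): the circle becomes the straight line through
    w_j and w_l, and the arc becomes the ray from w_j to infinity away from
    w_l, i.e. w = w_j + t (w_j - w_l), t -> +oo; hence z - zi ~ 1/(t (w_j - w_l))
    and the tangent direction at zi is 1/(w_j - w_l) (w = 0 for z = oo).  At
    the vertex oo one uses the (orientation-compatible) chart zeta = 1/z, in
    which the same computation at zeta = 0 gives w = z (and w = 0 for z = 0
    is consistent).  Only the direction of this vector matters. *)
Definition arc_tangent (pi pj pl : sphere) : C :=
  let w (m : sphere) : C :=
    match pi, m with
    | Some zi, Some zm => Cinv (zm - zi)%C
    | None, Some zm => zm
    | _, None => 0%C
    end in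
  Cinv (w pj - w pl)%C.

Definition vec_angle (u v : C) : R :=
  acos (Re (Cconj u * v)%C / (Cmod u * Cmod v)).

Definition ccw (u v : C) : Prop := 0 < Im (Cconj u * v)%C.

(** The shape of the ordered 4-tuple (p1,p2,p3,p4): the oriented curvilinear
    triangle T_4 with vertices p1, p2, p3 (sides on the generalized circles
    through p4), given by its three angles listed in the positive
    (counterclockwise) cyclic order of its vertices. *)
Definition shape_angles (p1 p2 p3 p4 : sphere) : R * R * R :=
  let a1 := vec_angle (arc_tangent p1 p2 p4) (arc_tangent p1 p3 p4) in
  let a2 := vec_angle (arc_tangent p2 p3 p4) (arc_tangent p2 p1 p4) in
  let a3 := vec_angle (arc_tangent p3 p1 p4) (arc_tangent p3 p2 p4) in
  if Rlt_dec 0 (Im (Cconj (arc_tangent p1 p2 p4) * arc_tangent p1 p3 p4)%C)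
  then (a1, a2, a3)
  else (a1, a3, a2).

Definition cyclic_eq (t t' : R * R * R) : Prop :=
  match t with (a, b, c) => t' = (a, b, c) \/ t' = (b, c, a) \/ t' = (c, a, b) end.

(* Main.v *)
Require Import Defs.
From Stdlib Require Import Reals List Lra.
From Coquelicot Require Import Coquelicot.
Import ListNotations.
Open Scope C_scope.

Definition hx (p : sphere) : C := match p with Some z => z | None => 1 end.
Definition hy (p : sphere) : C := match p with Some _ => 1 | None => 0 end.
Definition br (p q : sphere) : C := hx p * hy q - hy p * hx q.
Definition sg (p : sphere) : C := match p with Some _ => 1 | None => -1 end.

Lemma C_ext (a b : C) : Re a = Re b -> Im a = Im b -> a = b.
Proof. destruct a, b; simpl; intros; subst; auto. Qed.

Ltac cre H := let H1 := fresh in let H2 := fresh in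
  assert (H1 := f_equal Re H); assert (H2 := f_equal Im H); clear H;
  simpl in H1, H2.

Lemma Cminus_eq0 (a b : C) : a - b = 0 -> a = b.
Proof. intro H. destruct a, b. cre H. apply C_ext; simpl; lra. Qed.

Lemma br_neq p q : p <> q -> br p q <> 0.
Proof.
  destruct p as [a|], q as [b|]; unfold br; simpl; intros H E.
  - apply H. f_equal. apply Cminus_eq0. rewrite <- E. ring.
  - destruct a. cre E. lra.
  - destruct b. cre E. lra.
  - now apply H.
Qed.

Lemma sg_neq p : sg p <> 0.
Proof. destruct p; simpl; intro E; cre E; lra. Qed.

Lemma Cminus_swap_neq (a b : C) : a - b <> 0 -> b - a <> 0.
Proof. intros H E; apply H. replace (a - b) with (- (b - a)) by ring. rewrite E. ring. Qed.

Ltac cclean := rewrite ?Cmult_1_r, ?Cmult_1_l, ?Cmult_0_r, ?Cmult_0_l in *.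
Ltac nz := repeat split; try assumption; try (apply Cminus_swap_neq; assumption).

Lemma tangent_formula pi pj pl : pi <> pj -> pi <> pl -> pj <> pl ->
  arc_tangent pi pj pl = sg pi * (br pj pi * br pl pi / br pl pj).
Proof.
  intros Hij Hil Hjl.
  assert (Bji := br_neq pj pi ltac:(auto)).
  assert (Bli := br_neq pl pi ltac:(auto)).
  assert (Blj := br_neq pl pj ltac:(auto)).
  destruct pi as [zi|], pj as [zj|], pl as [zl|]; unfold arc_tangent, sg, br, hx, hy in *; simpl.
  all: try congruence.
  all: cclean; field; nz.
Qed.

Lemma Cinv_neq_0 (a : C) : a <> 0 -> / a <> 0.
Proof. intros H E. assert (X := Cinv_r a H). rewrite E, Cmult_0_r in X.
  apply (f_equal Re) in X. simpl in X. lra. Qed.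

Ltac cnz := unfold Cdiv; repeat (apply Cmult_neq_0 || apply Cinv_neq_0); auto.

Definition ang (w : C) : R := acos (Re w / Cmod w).

Lemma vec_angle_ang (u v : C) : vec_angle u v = ang (Cconj u * v).
Proof. unfold vec_angle, ang. now rewrite Cmod_mult, Cmod_conj. Qed.

Lemma conj_mul (u v : C) : u <> 0 -> Cconj u * v = RtoC (Cmod u ^ 2) * (v / u).
Proof. intro H. rewrite Cmod2_conj. field. auto. Qed.

Lemma Cmod_R_pos k : 0 < k -> Cmod (RtoC k) = k.
Proof. intro. rewrite Cmod_R. apply Rabs_right. lra. Qed.

Lemma ang_scal (k : R) (w : C) : 0 < k -> w <> 0 -> ang (RtoC k * w) = ang w.
Proof.
  intros Hk Hw. unfold ang. rewrite re_scal_l, Cmod_mult, Cmod_R_pos by auto.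
  f_equal. apply Cmod_gt_0 in Hw. field. lra.
Qed.

Lemma vertex (u v r : C) : u <> 0 -> v / u = r -> r <> 0 ->
  vec_angle u v = ang r /\ (0 < Im (Cconj u * v) <-> 0 < Im r).
Proof.
  intros Hu Hr Hr0. rewrite vec_angle_ang, conj_mul, Hr by auto.
  assert (Hk : 0 < (Cmod u ^ 2)%R).
  { apply pow_lt. now apply Cmod_gt_0. }
  split. { now apply ang_scal. }
  rewrite im_scal_l. split; intro H.
  - destruct (Rlt_dec 0 (Im r)); auto. nra.
  - nra.
Qed.

Definition lam p1 p2 p3 p4 := br p3 p1 * br p4 p2 / (br p2 p1 * br p4 p3).

Definition G (l : C) : R * R * R :=
  let a1 := ang l in let a2 := ang (/ (1 - l)) in let a3 := ang (1 - / l) in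
  if Rlt_dec 0 (Im l) then (a1, a2, a3) else (a1, a3, a2).

Definition distinct4 (p1 p2 p3 p4 : sphere) : Prop :=
  p1 <> p2 /\ p1 <> p3 /\ p1 <> p4 /\ p2 <> p3 /\ p2 <> p4 /\ p3 <> p4.

Ltac brnz := 
  repeat match goal with
  | H : ?a <> ?b |- _ =>
     let h1 := fresh "B" in let h2 := fresh "B" in
     assert (h1 := br_neq a b H);
     assert (h2 := br_neq b a (not_eq_sym H)); clear H
  end.

Lemma one_minus_lam p1 p2 p3 p4 : distinct4 p1 p2 p3 p4 ->
  1 - lam p1 p2 p3 p4 = br p2 p3 * br p4 p1 / (br p2 p1 * br p4 p3).
Proof.
  intros (?&?&?&?&?&?). brnz. unfold lam. field_simplify_eq; [unfold br; ring | nz].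
Qed.

Lemma lam_neq0 p1 p2 p3 p4 : distinct4 p1 p2 p3 p4 -> lam p1 p2 p3 p4 <> 0.
Proof.
  intros (?&?&?&?&?&?). brnz. unfold lam. unfold Cdiv.
  repeat apply Cmult_neq_0; auto. apply Cinv_neq_0. apply Cmult_neq_0; auto.
Qed.

Lemma one_minus_lam_neq0 p1 p2 p3 p4 : distinct4 p1 p2 p3 p4 -> 1 - lam p1 p2 p3 p4 <> 0.
Proof.
  intros D. rewrite one_minus_lam by auto. destruct D as (?&?&?&?&?&?). brnz. unfold Cdiv.
  repeat apply Cmult_neq_0; auto. apply Cinv_neq_0. apply Cmult_neq_0; auto.
Qed.

Lemma one_minus_inv_neq0 (l : C) : l <> 0 -> 1 - l <> 0 -> 1 - / l <> 0.
Proof. intros H0 H1 E. apply H1. replace (1 - l) with (- l * (1 - / l)) by (field; auto).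
  rewrite E. ring. Qed.

Lemma shape_G p1 p2 p3 p4 : distinct4 p1 p2 p3 p4 ->
  shape_angles p1 p2 p3 p4 = G (lam p1 p2 p3 p4).
Proof.
  intros D. assert (L0 := lam_neq0 _ _ _ _ D). assert (L1 := one_minus_lam_neq0 _ _ _ _ D).
  assert (OL := one_minus_lam _ _ _ _ D).
  destruct D as (?&?&?&?&?&?).
  unfold shape_angles.
  rewrite !tangent_formula by auto.
  brnz.
  assert (S1 := sg_neq p1). assert (S2 := sg_neq p2). assert (S3 := sg_neq p3).
  destruct (vertex (sg p1 * (br p2 p1 * br p4 p1 / br p4 p2)) (sg p1 * (br p3 p1 * br p4 p1 / br p4 p3)) (lam p1 p2 p3 p4)) as [V1 O1].
  { unfold Cdiv. repeat apply Cmult_neq_0; auto. now apply Cinv_neq_0. }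
  { unfold lam. field. nz. }
  { auto. }
  destruct (vertex (sg p2 * (br p3 p2 * br p4 p2 / br p4 p3)) (sg p2 * (br p1 p2 * br p4 p2 / br p4 p1)) (/ (1 - lam p1 p2 p3 p4))) as [V2 _].
  { unfold Cdiv. repeat apply Cmult_neq_0; auto. now apply Cinv_neq_0. }
  { rewrite OL. field_simplify_eq; [unfold br; ring | nz]. }
  { now apply Cinv_neq_0. }
  destruct (vertex (sg p3 * (br p1 p3 * br p4 p3 / br p4 p1)) (sg p3 * (br p2 p3 * br p4 p3 / br p4 p2)) (1 - / lam p1 p2 p3 p4)) as [V3 _].
  { unfold Cdiv. repeat apply Cmult_neq_0; auto. now apply Cinv_neq_0. }
  { unfold lam. field_simplify_eq; [unfold br; ring | nz]. }
  { now apply one_minus_inv_neq0. }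
  rewrite V1, V2, V3. unfold G.
  destruct (Rlt_dec 0 _) as [h|h]; destruct (Rlt_dec 0 (Im _)) as [h'|h']; try reflexivity; tauto.
Qed.

Lemma mob_hom a b c d p : a * d - b * c <> 0 -> exists k : C, k <> 0 /\
  hx (mobius_app a b c d p) = k * (a * hx p + b * hy p) /\
  hy (mobius_app a b c d p) = k * (c * hx p + d * hy p).
Proof.
  intro Hdet. destruct p as [z|]; unfold mobius_app.
  - match goal with |- context [Defs.Ceq_dec ?x ?y] => destruct (Defs.Ceq_dec x y) as [E|E] end; unfold hx, hy.
    + assert (N : a * z + b <> 0).
      { intro F. apply Hdet.
        replace d with (c * z + d - c * z) by ring. rewrite E.
        replace b with (a * z + b - a * z) by ring. rewrite F. ring. }
      exists (/ (a * z + b)). split; [cnz|]. split.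
      * field. auto.
      * rewrite Cmult_1_r, E. ring.
    + exists (/ (c * z + d)). split; [cnz|]. split.
      * rewrite Cmult_1_r. field. auto.
      * rewrite Cmult_1_r. field. auto.
  - match goal with |- context [Defs.Ceq_dec ?x ?y] => destruct (Defs.Ceq_dec x y) as [E|E] end; unfold hx, hy.
    + subst c. assert (N : a <> 0).
      { intro F. apply Hdet. rewrite F. ring. }
      exists (/ a). split; [cnz|]. split.
      * field. auto.
      * ring.
    + exists (/ c). split; [cnz|]. split.
      * field. auto.
      * field. auto.
Qed.

Definition mobw a b c d p (k : C) := k <> 0 /\
  hx (mobius_app a b c d p) = k * (a * hx p + b * hy p) /\
  hy (mobius_app a b c d p) = k * (c * hx p + d * hy p).

Lemma br_mobw a b c d p q kp kq : mobw a b c d p kp -> mobw a b c d q kq ->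
  br (mobius_app a b c d p) (mobius_app a b c d q) = kp * kq * (a * d - b * c) * br p q.
Proof.
  intros (_ & X1 & Y1) (_ & X2 & Y2). unfold br. rewrite X1, Y1, X2, Y2. ring.
Qed.

Lemma mob_neq a b c d p q : a * d - b * c <> 0 -> p <> q ->
  mobius_app a b c d p <> mobius_app a b c d q.
Proof.
  intros H N E. destruct (mob_hom a b c d p H) as (kp & Wp).
  destruct (mob_hom a b c d q H) as (kq & Wq).
  assert (X := br_mobw a b c d p q kp kq Wp Wq). destruct Wp as [Hp _]. destruct Wq as [Hq _].
  rewrite E in X. assert (Z : br (mobius_app a b c d q) (mobius_app a b c d q) = 0) by (unfold br; ring).
  rewrite Z in X.
  assert (W : kp * kq * (a * d - b * c) * br p q <> 0) by (apply Cmult_neq_0; [cnz | now apply br_neq]).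
  now apply W.
Qed.

Lemma lam_mob a b c d p1 p2 p3 p4 : a * d - b * c <> 0 -> distinct4 p1 p2 p3 p4 ->
  lam (mobius_app a b c d p1) (mobius_app a b c d p2) (mobius_app a b c d p3) (mobius_app a b c d p4)
  = lam p1 p2 p3 p4.
Proof.
  intros H (?&?&?&?&?&?). brnz. unfold lam.
  destruct (mob_hom a b c d p1 H) as (k1 & W1).
  destruct (mob_hom a b c d p2 H) as (k2 & W2).
  destruct (mob_hom a b c d p3 H) as (k3 & W3).
  destruct (mob_hom a b c d p4 H) as (k4 & W4).
  rewrite (br_mobw _ _ _ _ _ _ _ _ W3 W1), (br_mobw _ _ _ _ _ _ _ _ W4 W2),
    (br_mobw _ _ _ _ _ _ _ _ W2 W1), (br_mobw _ _ _ _ _ _ _ _ W4 W3).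
  destruct W1 as [? _], W2 as [? _], W3 as [? _], W4 as [? _].
  field. nz.
Qed.

Lemma Im_inv (w : C) : Im (/ w) = (- Im w / (Re w ^ 2 + Im w ^ 2))%R.
Proof. destruct w as [x y]. reflexivity. Qed.

Lemma Im_nz_neq0 (w : C) : Im w <> 0%R -> w <> 0.
Proof. intros H E. apply H. rewrite E. reflexivity. Qed.

Lemma sq_pos (w : C) : Im w <> 0%R -> (0 < Re w ^ 2 + Im w ^ 2)%R.
Proof. intro H. assert (0 < Im w ^ 2)%R by (apply pow2_gt_0; auto). nra. Qed.

Lemma Im_inv_pos (w : C) : Im w <> 0%R -> (0 < Im (/ w) <-> Im w < 0)%R.
Proof.
  intro H. rewrite Im_inv. assert (P := sq_pos w H).
  split; intro X.
  - destruct (Rlt_dec (Im w) 0); auto.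
    exfalso. assert (0 < Im w)%R by lra.
    assert (- Im w / (Re w ^ 2 + Im w ^ 2) < 0)%R.
    { unfold Rdiv. rewrite Ropp_mult_distr_l_reverse. apply Ropp_lt_gt_0_contravar.
      apply Rmult_lt_0_compat; auto. now apply Rinv_0_lt_compat. }
    lra.
  - unfold Rdiv. apply Rmult_lt_0_compat; [lra | now apply Rinv_0_lt_compat].
Qed.

Lemma Im_inv_nz (w : C) : Im w <> 0%R -> Im (/ w) <> 0%R.
Proof.
  intros H E. rewrite Im_inv in E. assert (P := sq_pos w H).
  unfold Rdiv in E. apply Rmult_integral in E. destruct E as [E|E].
  - lra.
  - apply Rinv_neq_0_compat in E; auto. lra.
Qed.

Lemma Im_1m (w : C) : Im (1 - w) = (- Im w)%R.
Proof. destruct w; simpl; ring. Qed.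

Lemma ang_conj (w : C) : ang (Cconj w) = ang w.
Proof. unfold ang. now rewrite re_conj, Cmod_conj. Qed.

Lemma ang_inv (w : C) : w <> 0 -> ang (/ w) = ang w.
Proof.
  intro H. assert (Hm : (0 < Cmod w)%R) by now apply Cmod_gt_0.
  replace (/ w) with (RtoC (/ (Cmod w ^ 2))%R * Cconj w).
  - rewrite ang_scal. apply ang_conj. apply Rinv_0_lt_compat, pow_lt; auto.
    intro E. apply H. rewrite <- (Cconj_conj w), E. apply C_ext; simpl; lra.
  - rewrite RtoC_inv by (apply pow_nonzero; lra). rewrite Cmod2_conj. field.
    split; auto. intro E. apply H. rewrite <- (Cconj_conj w), E. apply C_ext; simpl; lra.
Qed.

Lemma G_inv (l : C) : Im l <> 0%R -> G (/ l) = G l.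
Proof.
  intro H. assert (L0 := Im_nz_neq0 l H).
  assert (L1 : 1 - l <> 0) by (apply Im_nz_neq0; rewrite Im_1m; lra).
  assert (L2 : 1 - / l <> 0) by now apply one_minus_inv_neq0.
  unfold G.
  replace (/ / l) with l by (field; auto).
  rewrite (ang_inv l), (ang_inv (1 - / l)), (ang_inv (1 - l)) by auto.
  assert (X := Im_inv_pos l H).
  destruct (Rlt_dec 0 (Im (/ l))); destruct (Rlt_dec 0 (Im l)); try reflexivity.
  - exfalso. apply X in r. lra.
  - exfalso. apply n. apply X. lra.
Qed.

Definition psi (l : C) : C := / (1 - l).

Lemma Im_psi_pos (l : C) : Im l <> 0%R -> (0 < Im (psi l) <-> 0 < Im l)%R.
Proof.
  intro H. unfold psi. rewrite Im_inv_pos by (rewrite Im_1m; lra). rewrite Im_1m. lra.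
Qed.

Lemma Im_psi_nz (l : C) : Im l <> 0%R -> Im (psi l) <> 0%R.
Proof. intro H. unfold psi. apply Im_inv_nz. rewrite Im_1m. lra. Qed.

Lemma G_psi (l : C) : Im l <> 0%R -> cyclic_eq (G l) (G (psi l)).
Proof.
  intro H. assert (L0 := Im_nz_neq0 l H).
  assert (L1 : 1 - l <> 0) by (apply Im_nz_neq0; rewrite Im_1m; lra).
  assert (E1 : / (1 - psi l) = 1 - / l).
  { unfold psi. field. cbv beta. repeat split; auto.
    intro E; apply L0; replace l with (- (1 - l - 1)) by ring; rewrite E; ring. }
  assert (E2 : 1 - / psi l = l) by (unfold psi; field; auto).
  assert (X := Im_psi_pos l H).
  unfold G. rewrite E1, E2. fold (psi l).
  destruct (Rlt_dec 0 (Im l)); destruct (Rlt_dec 0 (Im (psi l))); simpl.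
  - right; left; reflexivity.
  - exfalso; apply n; apply X; auto.
  - exfalso; apply n; apply X; auto.
  - right; right; reflexivity.
Qed.

Lemma G_1m (l : C) : Im l <> 0%R -> cyclic_eq (G l) (G (1 - l)).
Proof.
  intro H. assert (L1 : 1 - l <> 0) by (apply Im_nz_neq0; rewrite Im_1m; lra).
  replace (1 - l) with (/ psi l) by (unfold psi; field; auto).
  rewrite G_inv by now apply Im_psi_nz. now apply G_psi.
Qed.

Lemma cyc_refl t : cyclic_eq t t.
Proof. destruct t as [[a b] c]. simpl. now left. Qed.

Lemma cyc_sym t t' : cyclic_eq t t' -> cyclic_eq t' t.
Proof.
  destruct t as [[a b] c]; destruct t' as [[a' b'] c']; simpl.
  intros [H|[H|H]]; inversion H; subst; auto.
Qed.

Lemma cyc_trans t t' t'' : cyclic_eq t t' -> cyclic_eq t' t'' -> cyclic_eq t t''.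
Proof.
  destruct t as [[a b] c]; destruct t' as [[a' b'] c']; destruct t'' as [[a'' b''] c'']; simpl.
  intros [H|[H|H]] [H'|[H'|H']]; inversion H; inversion H'; subst; auto.
Qed.

Lemma lam_s12 x1 x2 x3 x4 : distinct4 x1 x2 x3 x4 -> lam x2 x1 x3 x4 = 1 - lam x1 x2 x3 x4.
Proof. intros (?&?&?&?&?&?). brnz. unfold lam. field_simplify_eq; [unfold br; ring | nz]. Qed.
Lemma lam_s23 x1 x2 x3 x4 : distinct4 x1 x2 x3 x4 -> lam x1 x3 x2 x4 = / lam x1 x2 x3 x4.
Proof. intros (?&?&?&?&?&?). brnz. unfold lam. field_simplify_eq; [unfold br; ring | nz]. Qed.
Lemma lam_s34 x1 x2 x3 x4 : distinct4 x1 x2 x3 x4 -> lam x1 x2 x4 x3 = 1 - lam x1 x2 x3 x4.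
Proof. intros (?&?&?&?&?&?). brnz. unfold lam. field_simplify_eq; [unfold br; ring | nz]. Qed.

Definition SE t x1 x2 x3 x4 := distinct4 x1 x2 x3 x4 /\ Im (lam x1 x2 x3 x4) <> 0%R /\
  cyclic_eq t (G (lam x1 x2 x3 x4)).

Lemma SE12 t x1 x2 x3 x4 : SE t x2 x1 x3 x4 -> SE t x1 x2 x3 x4.
Proof.
  intros (D & I & C). assert (D' : distinct4 x1 x2 x3 x4).
  { destruct D as (?&?&?&?&?&?). repeat split; auto. }
  rewrite (lam_s12 _ _ _ _ D') in I, C. rewrite Im_1m in I.
  split; auto. split; [lra|]. eapply cyc_trans; [apply C|]. apply cyc_sym, G_1m. lra.
Qed.

Lemma SE34 t x1 x2 x3 x4 : SE t x1 x2 x4 x3 -> SE t x1 x2 x3 x4.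
Proof.
  intros (D & I & C). assert (D' : distinct4 x1 x2 x3 x4).
  { destruct D as (?&?&?&?&?&?). repeat split; auto. }
  rewrite (lam_s34 _ _ _ _ D') in I, C. rewrite Im_1m in I.
  split; auto. split; [lra|]. eapply cyc_trans; [apply C|]. apply cyc_sym, G_1m. lra.
Qed.

Lemma SE23 t x1 x2 x3 x4 : SE t x1 x3 x2 x4 -> SE t x1 x2 x3 x4.
Proof.
  intros (D & I & C). assert (D' : distinct4 x1 x2 x3 x4).
  { destruct D as (?&?&?&?&?&?). repeat split; auto. }
  rewrite (lam_s23 _ _ _ _ D') in I, C.
  assert (I' : Im (lam x1 x2 x3 x4) <> 0%R).
  { intro E. apply I. rewrite Im_inv, E. unfold Rdiv. ring. }
  split; auto. split; auto. rewrite G_inv in C; auto.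
Qed.

Lemma fwd_core p1 p2 p3 p4 x1 x2 x3 x4 :
  distinct4 p1 p2 p3 p4 -> Im (lam p1 p2 p3 p4) <> 0%R ->
  In x1 [p1; p2; p3; p4] -> In x2 [p1; p2; p3; p4] ->
  In x3 [p1; p2; p3; p4] -> In x4 [p1; p2; p3; p4] ->
  distinct4 x1 x2 x3 x4 ->
  cyclic_eq (G (lam p1 p2 p3 p4)) (G (lam x1 x2 x3 x4)).
Proof.
  intros D I H1 H2 H3 H4 Dx.
  assert (S : SE (G (lam p1 p2 p3 p4)) p1 p2 p3 p4).
  { split; auto. split; auto. apply cyc_refl. }
  cut (SE (G (lam p1 p2 p3 p4)) x1 x2 x3 x4). { intros (_ & _ & C). exact C. }
  clear I.
  simpl in H1, H2, H3, H4.
  destruct H1 as [<-|[<-|[<-|[<-|[]]]]]; destruct H2 as [<-|[<-|[<-|[<-|[]]]]];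
  destruct H3 as [<-|[<-|[<-|[<-|[]]]]]; destruct H4 as [<-|[<-|[<-|[<-|[]]]]];
  try (exfalso; destruct Dx as (?&?&?&?&?&?); congruence);
  clear Dx; generalize S; clear S D;
  intro S;
  repeat first [ exact S | apply SE12; exact S | apply SE23; exact S | apply SE34; exact S ];
  eauto 8 using SE12, SE23, SE34.
Qed.

Definition QA (al ga : C) : R := Im (Cconj al * ga).
Definition QD (be de : C) : R := Im (Cconj be * de).
Definition QB (al be ga de : C) : C := Ci * Cconj (Cconj be * ga - al * Cconj de).

Lemma Q_expand al be ga de z :
  Im (Cconj (al * z + be) * (ga * z + de)) =
  (QA al ga * (Re z ^ 2 + Im z ^ 2) + Re (Cconj (QB al be ga de) * z) + QD be de)%R.
Proof.
  destruct al, be, ga, de, z. unfold QA, QB, QD. simpl. ring.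
Qed.

Lemma Q_det al be ga de :
  (4 * QA al ga * QD be de - (Re (QB al be ga de) ^ 2 + Im (QB al be ga de) ^ 2))%R =
  (- (Re (al * de - be * ga) ^ 2 + Im (al * de - be * ga) ^ 2))%R.
Proof.
  destruct al, be, ga, de. unfold QA, QB, QD. simpl. ring.
Qed.

Definition condQ al be ga de (v : sphere) : Prop :=
  Im (Cconj (al * hx v + be * hy v) * (ga * hx v + de * hy v)) = 0%R.

Lemma condQ_some al be ga de z : condQ al be ga de (Some z) ->
  (QA al ga * (Re z ^ 2 + Im z ^ 2) + Re (Cconj (QB al be ga de) * z) + QD be de)%R = 0%R.
Proof. unfold condQ, hx, hy. rewrite !Cmult_1_r. now rewrite Q_expand. Qed.

Lemma condQ_none al be ga de : condQ al be ga de None -> QA al ga = 0%R.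
Proof.
  unfold condQ, hx, hy, QA. intro H. rewrite <- H.
  replace (al * 1 + be * 0) with al by ring. replace (ga * 1 + de * 0) with ga by ring. reflexivity.
Qed.

Lemma on_line_Q al be ga de v : QA al ga = 0%R -> condQ al be ga de v ->
  on_line (QB al be ga de) (- QD be de) v.
Proof.
  intros HA H. destruct v as [z|]; unfold on_line; auto.
  apply condQ_some in H. rewrite HA in H. lra.
Qed.

Lemma on_circle_Q al be ga de v (A : R) (Bc : C) (D : R) :
  A = QA al ga -> Bc = QB al be ga de -> D = QD be de -> A <> 0%R ->
  condQ al be ga de v ->
  exists z, v = Some z /\
  ((Re z - (- Re Bc / (2 * A))) ^ 2 + (Im z - (- Im Bc / (2 * A))) ^ 2 =
    (Re Bc ^ 2 + Im Bc ^ 2) / (4 * A ^ 2) - D / A)%R.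
Proof.
  intros EA EB ED HA H. destruct v as [z|].
  - exists z. split; auto. apply condQ_some in H. rewrite <- EA, <- EB, <- ED in H.
    destruct z as [x y]. destruct Bc as [bx by']. simpl in *.
    apply Rminus_diag_uniq.
    match type of H with ?e = 0%R => transitivity (e / A)%R end;
      [field; auto | rewrite H; unfold Rdiv; ring].
  - apply condQ_none in H. congruence.
Qed.

Lemma sumsq0 (a b r : R) : (a ^ 2 + b ^ 2 = r)%R -> ~ (0 < r)%R -> a = 0%R /\ b = 0%R.
Proof. intros H N. assert (0 <= a ^ 2)%R by apply pow2_ge_0. assert (0 <= b ^ 2)%R by apply pow2_ge_0.
  split.
  - destruct (Req_dec a 0) as [|n]; auto. apply (pow_nonzero a 2) in n. lra.
  - destruct (Req_dec b 0) as [|n]; auto. apply (pow_nonzero b 2) in n. lra.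
Qed.

Lemma gcircle4 al be ga de p1 p2 p3 p4 : al * de - be * ga <> 0 -> p1 <> p2 ->
  condQ al be ga de p1 -> condQ al be ga de p2 -> condQ al be ga de p3 -> condQ al be ga de p4 ->
  on_common_gcircle [p1; p2; p3; p4].
Proof.
  intros Hdet N12 C1 C2 C3 C4.
  destruct (Req_dec (QA al ga) 0) as [HA|HA].
  - right. exists (QB al be ga de), (- QD be de)%R. split.
    + intro E. apply Hdet. assert (X := Q_det al be ga de). rewrite HA, E in X.
      replace (Re 0) with 0%R in X by reflexivity. replace (Im 0) with 0%R in X by reflexivity.
      set (u := Re (al * de - be * ga)) in X. set (v := Im (al * de - be * ga)) in X.
      assert (u = 0%R /\ v = 0%R) as [Hu Hv] by (split; nra).
      apply C_ext; [exact Hu | exact Hv].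
    + repeat constructor; apply on_line_Q; auto.
  - left.
    set (A := QA al ga) in *. set (Bc := QB al be ga de). set (D := QD be de).
    set (r2 := ((Re Bc ^ 2 + Im Bc ^ 2) / (4 * A ^ 2) - D / A)%R).
    set (c := ((- Re Bc / (2 * A))%R, (- Im Bc / (2 * A))%R) : C).
    destruct (on_circle_Q al be ga de p1 A Bc D eq_refl eq_refl eq_refl HA C1) as (z1 & -> & E1).
    destruct (on_circle_Q al be ga de p2 A Bc D eq_refl eq_refl eq_refl HA C2) as (z2 & -> & E2).
    destruct (on_circle_Q al be ga de p3 A Bc D eq_refl eq_refl eq_refl HA C3) as (z3 & -> & E3).
    destruct (on_circle_Q al be ga de p4 A Bc D eq_refl eq_refl eq_refl HA C4) as (z4 & -> & E4).
    fold r2 in E1, E2, E3, E4.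
    assert (Hr : (0 < r2)%R).
    { destruct (Rlt_dec 0 r2) as [h|h]; auto. exfalso. apply N12. f_equal.
      apply sumsq0 in E1; auto. apply sumsq0 in E2; auto.
      apply C_ext; lra. }
    exists c, (sqrt r2). split. { now apply sqrt_lt_R0. }
    assert (K : forall z, ((Re z - (- Re Bc / (2 * A))) ^ 2 + (Im z - (- Im Bc / (2 * A))) ^ 2 = r2)%R ->
       on_circle c (sqrt r2) (Some z)).
    { intros z Ez. unfold on_circle, Cmod. f_equal. rewrite <- Ez. destruct z. unfold c. simpl. ring. }
    repeat constructor; apply K; auto.
Qed.

Lemma nodup_distinct p1 p2 p3 p4 : NoDup [p1; p2; p3; p4] -> distinct4 p1 p2 p3 p4.
Proof.
  intro H. inversion H as [|? ? N1 H1]; subst. inversion H1 as [|? ? N2 H2]; subst.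
  inversion H2 as [|? ? N3 H3]; subst. simpl in *.
  repeat split; intro E; subst; tauto.
Qed.

Lemma Im_conj_self (w : C) : Im (Cconj w * w) = 0%R.
Proof. destruct w; simpl; ring. Qed.

Lemma Im_conj_real (l Y : C) : Im l = 0%R -> Im (Cconj (l * Y) * Y) = 0%R.
Proof. destruct l as [a b], Y as [c d]; simpl; intro H; subst; ring. Qed.

Lemma gp_Im p1 p2 p3 p4 : general_position4 p1 p2 p3 p4 -> Im (lam p1 p2 p3 p4) <> 0%R.
Proof.
  intros [ND NC] E. apply NC. assert (D := nodup_distinct _ _ _ _ ND).
  assert (D' := D). destruct D' as (?&?&?&?&?&?). brnz.
  set (al := hy p1 * br p2 p4). set (be := - hx p1 * br p2 p4).
  set (ga := hy p4 * br p2 p1). set (de := - hx p4 * br p2 p1).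
  assert (F : forall v, al * hx v + be * hy v = br v p1 * br p2 p4) by (intro; unfold al, be, br; ring).
  assert (Gf : forall v, ga * hx v + de * hy v = br v p4 * br p2 p1) by (intro; unfold ga, de, br; ring).
  assert (K : forall v, condQ al be ga de v <-> Im (Cconj (br v p1 * br p2 p4) * (br v p4 * br p2 p1)) = 0%R).
  { intro v. unfold condQ. rewrite F, Gf. tauto. }
  apply (gcircle4 al be ga de); try apply K.
  - replace (al * de - be * ga) with (br p2 p4 * br p2 p1 * br p1 p4) by (unfold al, be, ga, de, br; ring).
    cnz.
  - destruct D as (?&_). auto.
  - replace (br p1 p1) with (RtoC 0) by (unfold br; ring). rewrite Cmult_0_l.
    destruct (br p1 p4 * br p2 p1); simpl; ring.
  - rewrite (Cmult_comm (br p2 p4)). apply Im_conj_self.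
  - replace (br p3 p1 * br p2 p4) with (lam p1 p2 p3 p4 * (br p3 p4 * br p2 p1)).
    + now apply Im_conj_real.
    + unfold lam. field_simplify_eq; [unfold br; ring | nz].
  - replace (br p4 p4) with (RtoC 0) by (unfold br; ring). rewrite Cmult_0_l, Cmult_0_r. reflexivity.
Qed.

Lemma ang_bound (u : C) : u <> 0 -> (-1 <= Re u / Cmod u <= 1)%R.
Proof.
  intro H. assert (Hm : (0 < Cmod u)%R) by now apply Cmod_gt_0.
  assert (Hr := re_le_Cmod u). unfold Rabs in Hr. destruct (Rcase_abs (Re u)).
  - split.
    + apply (Rmult_le_reg_r (Cmod u)); auto. unfold Rdiv. rewrite Rmult_assoc, Rinv_l by lra. lra.
    + apply (Rmult_le_reg_r (Cmod u)); auto. unfold Rdiv. rewrite Rmult_assoc, Rinv_l by lra. lra.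
  - split.
    + apply (Rmult_le_reg_r (Cmod u)); auto. unfold Rdiv. rewrite Rmult_assoc, Rinv_l by lra. lra.
    + apply (Rmult_le_reg_r (Cmod u)); auto. unfold Rdiv. rewrite Rmult_assoc, Rinv_l by lra. lra.
Qed.

Lemma ang_eq_re (u v : C) : u <> 0 -> v <> 0 -> ang u = ang v -> (Re u / Cmod u = Re v / Cmod v)%R.
Proof.
  intros Hu Hv E. unfold ang in E. rewrite <- (cos_acos (Re u / Cmod u)), <- (cos_acos (Re v / Cmod v)).
  - now rewrite E.
  - now apply ang_bound.
  - now apply ang_bound.
Qed.

Lemma sq_same_sign (a b : R) : (a ^ 2 = b ^ 2)%R -> ((0 < a /\ 0 < b) \/ (a < 0 /\ b < 0))%R -> a = b.
Proof. intros E S. assert ((a - b) * (a + b) = 0)%R by (rewrite <- Rminus_diag_eq with (a ^ 2)%R (b ^ 2)%R; auto; ring).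
  apply Rmult_integral in H. destruct H; lra. Qed.

Lemma dir_eq (u v : C) : ((0 < Im u /\ 0 < Im v) \/ (Im u < 0 /\ Im v < 0))%R ->
  ang u = ang v -> exists t : R, (0 < t)%R /\ Re v = (t * Re u)%R /\ Im v = (t * Im u)%R.
Proof.
  intros S E.
  assert (Hu : u <> 0) by (apply Im_nz_neq0; lra).
  assert (Hv : v <> 0) by (apply Im_nz_neq0; lra).
  assert (Mu : (0 < Cmod u)%R) by now apply Cmod_gt_0.
  assert (Mv : (0 < Cmod v)%R) by now apply Cmod_gt_0.
  assert (R := ang_eq_re u v Hu Hv E).
  exists (Cmod v / Cmod u)%R. split. { apply Rdiv_lt_0_compat; auto. }
  assert (Rv : Re v = (Cmod v / Cmod u * Re u)%R).
  { apply (Rmult_eq_reg_r (/ Cmod v)); [| apply Rinv_neq_0_compat; lra].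
    change (Re v * / Cmod v)%R with (Re v / Cmod v)%R. rewrite <- R. field. lra. }
  split; auto.
  assert (Cu := Cmod2_alt u). assert (Cv := Cmod2_alt v).
  apply sq_same_sign.
  - assert (Im v ^ 2 = Cmod v ^ 2 - Re v ^ 2)%R by lra.
    assert (Im u ^ 2 = Cmod u ^ 2 - Re u ^ 2)%R by lra.
    rewrite H, Rv. replace ((Cmod v / Cmod u * Im u) ^ 2)%R with ((Cmod v / Cmod u)^2 * Im u ^ 2)%R by ring.
    rewrite H0. field. lra.
  - assert (0 < Cmod v / Cmod u)%R by (apply Rdiv_lt_0_compat; auto).
    destruct S as [[]|[]]; [left|right]; split; auto; nra.
Qed.

Lemma uhp_inj (u v : C) : (0 < Im u)%R -> (0 < Im v)%R -> ang u = ang v ->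
  ang (psi u) = ang (psi v) -> u = v.
Proof.
  intros Pu Pv E1 E2.
  assert (N1 : 1 - u <> 0) by (apply Im_nz_neq0; rewrite Im_1m; lra).
  assert (N2 : 1 - v <> 0) by (apply Im_nz_neq0; rewrite Im_1m; lra).
  unfold psi in E2. rewrite !ang_inv in E2 by auto.
  destruct (dir_eq u v ltac:(lra) E1) as (t & Ht & R1 & I1).
  destruct (dir_eq (1 - u) (1 - v) ltac:(rewrite !Im_1m; lra) E2) as (s & Hs & R2 & I2).
  rewrite !Im_1m in I2.
  destruct u as [x y], v as [x' y']. simpl in *.
  assert (s = t) by nra. subst s.
  assert (t = 1)%R by nra. subst t.
  f_equal; lra.
Qed.

Lemma G_pos (l : C) : (0 < Im l)%R -> G l = (ang l, ang (psi l), ang (1 - / l)).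
Proof. intro H. unfold G, psi. destruct (Rlt_dec 0 (Im l)); [reflexivity | lra]. Qed.

Lemma Im_1m_inv_pos (l : C) : (0 < Im l)%R -> (0 < Im (1 - / l))%R.
Proof.
  intro H. rewrite Im_1m. assert (X := Im_inv_pos l ltac:(lra)).
  assert (Im (/ l) <> 0%R) by (apply Im_inv_nz; lra).
  destruct (Rlt_dec 0 (Im (/ l))) as [h|h]; [apply X in h; lra | lra].
Qed.

Lemma normalize (l : C) : Im l <> 0%R -> exists lp, (0 < Im lp)%R /\ G lp = G l /\ (l = lp \/ l = / lp).
Proof.
  intro H. destruct (Rlt_dec 0 (Im l)) as [h|h].
  - exists l. auto.
  - exists (/ l). assert (L0 := Im_nz_neq0 l H). split; [|split].
    + apply Im_inv_pos; auto. lra.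
    + now apply G_inv.
    + right. field. auto.
Qed.

Lemma C1_neq0 : (1 : C) <> 0.
Proof. intro E. apply (f_equal Re) in E. simpl in E. lra. Qed.

Ltac side_nz H :=
  match goal with
  | |- ?X <> _ => first [ assumption |
      let E := fresh in intro E; apply H; transitivity (- X); [ring | rewrite E; ring] |
      let E := fresh in intro E; apply H; transitivity X; [ring | rewrite E; ring] |
      let E := fresh in intro E; ring_simplify in E; apply C1_neq0; exact E ]
  end.

Lemma orbit (l m : C) : Im l <> 0%R -> Im m <> 0%R -> cyclic_eq (G l) (G m) ->
  l = m \/ l = psi m \/ l = 1 - / m \/ l = / m \/ l = 1 - m \/ l = psi (/ m).
Proof.
  intros Hl Hm C.
  destruct (normalize l Hl) as (lp & Pl & Gl & El).
  destruct (normalize m Hm) as (mp & Pm & Gm & Em).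
  rewrite <- Gl, <- Gm in C.
  assert (Lp0 := Im_nz_neq0 lp ltac:(lra)).
  assert (Lp1 : 1 - lp <> 0) by (apply Im_nz_neq0; rewrite Im_1m; lra).
  assert (Mp0 := Im_nz_neq0 mp ltac:(lra)).
  assert (Mp1 : 1 - mp <> 0) by (apply Im_nz_neq0; rewrite Im_1m; lra).
  assert (PP : psi (psi lp) = 1 - / lp).
  { unfold psi. field. cbv beta. repeat split; side_nz Lp0. }
  assert (PQ : psi (1 - / lp) = lp).
  { unfold psi. field. cbv beta. repeat split; side_nz Lp0. }
  assert (Kp : lp = mp \/ lp = 1 - / mp \/ lp = psi mp).
  { rewrite !G_pos in C by auto. simpl in C.
    destruct C as [E|[E|E]]; inversion E as [[E1 E2 E3]].
    - left. apply uhp_inj; auto.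
    - right; left.
      assert (mp = psi lp).
      { apply uhp_inj; auto. now apply Im_psi_pos; lra. now rewrite PP. }
      subst mp. unfold psi. field. cbv beta. repeat split; side_nz Lp0.
    - right; right.
      assert (mp = 1 - / lp).
      { apply uhp_inj; auto. now apply Im_1m_inv_pos. now rewrite PQ. }
      subst mp. now rewrite PQ. }
  assert (M0 : m <> 0) by now apply Im_nz_neq0.
  assert (M1 : 1 - m <> 0) by (apply Im_nz_neq0; rewrite Im_1m; lra).
  assert (Em' : mp = m \/ mp = / m).
  { destruct Em as [E|E]; rewrite E; [left; reflexivity | right; field; auto]. }
  clear Em.
  destruct Em' as [-> | ->]; destruct Kp as [-> | [-> | ->]]; destruct El as [-> | ->].
  - left; reflexivity.
  - right; right; right; left; reflexivity.
  - right; right; left; reflexivity.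
  - right; right; right; right; right. unfold psi. reflexivity.
  - right; left; reflexivity.
  - right; right; right; right; left. unfold psi. field. auto.
  - right; right; right; left; reflexivity.
  - left. field. auto.
  - right; right; right; right; left. field. auto.
  - right; left. unfold psi. field. cbv beta. repeat split; first [side_nz M0 | side_nz M1 | idtac].

  - right; right; right; right; right. reflexivity.
  - right; right; left. unfold psi. field. cbv beta. repeat split; first [side_nz M0 | side_nz M1 | idtac].

Qed.


Lemma br_eq0 p q : br p q = 0 -> p = q.
Proof.
  destruct p as [a|], q as [b|]; unfold br, hx, hy; intro E.
  - f_equal. apply Cminus_eq0. rewrite <- E. ring.
  - exfalso. destruct a. cre E. lra.
  - exfalso. destruct b. cre E. lra.
  - reflexivity.
Qed.

Section Build.
Variables x1 x2 x3 x4 y1 y2 y3 y4 : sphere.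
Let ap := hy x1 * br x2 x4.
Let bp := - hx x1 * br x2 x4.
Let cp := hy x4 * br x2 x1.
Let dp := - hx x4 * br x2 x1.
Let aq := hy y1 * br y2 y4.
Let bq := - hx y1 * br y2 y4.
Let cq := hy y4 * br y2 y1.
Let dq := - hx y4 * br y2 y1.
Definition ma := dq * ap - bq * cp.
Definition mb := dq * bp - bq * dp.
Definition mc := - cq * ap + aq * cp.
Definition md := - cq * bp + aq * dp.

Lemma m_det : ma * md - mb * mc = (br y2 y4 * br y2 y1 * br y1 y4) * (br x2 x4 * br x2 x1 * br x1 x4).
Proof. unfold ma, mb, mc, md, ap, bp, cp, dp, aq, bq, cq, dq, br. ring. Qed.

Lemma m_br v w : ma * md - mb * mc <> 0 -> exists k : C, k <> 0 /\
  br (mobius_app ma mb mc md v) w =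
  k * (br v x1 * br x2 x4 * (br w y4 * br y2 y1) - br v x4 * br x2 x1 * (br w y1 * br y2 y4)).
Proof.
  intro H. destruct (mob_hom ma mb mc md v H) as (k & Hk & X & Y).
  exists k. split; auto. unfold br at 1. rewrite X, Y.
  unfold ma, mb, mc, md, ap, bp, cp, dp, aq, bq, cq, dq, br. ring.
Qed.
End Build.

Lemma build x1 x2 x3 x4 y1 y2 y3 y4 : distinct4 x1 x2 x3 x4 -> distinct4 y1 y2 y3 y4 ->
  lam x1 x2 x3 x4 = lam y1 y2 y3 y4 ->
  exists a b c d, a * d - b * c <> 0 /\
   mobius_app a b c d x1 = y1 /\ mobius_app a b c d x2 = y2 /\
   mobius_app a b c d x3 = y3 /\ mobius_app a b c d x4 = y4.
Proof.
  intros Dx Dy E.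
  assert (Dx' := Dx). assert (Dy' := Dy).
  destruct Dx' as (?&?&?&?&?&?). destruct Dy' as (?&?&?&?&?&?). brnz.
  assert (H : ma x1 x2 x4 y1 y2 y4 * md x1 x2 x4 y1 y2 y4 - mb x1 x2 x4 y1 y2 y4 * mc x1 x2 x4 y1 y2 y4 <> 0).
  { rewrite m_det. cnz. }
  exists (ma x1 x2 x4 y1 y2 y4), (mb x1 x2 x4 y1 y2 y4), (mc x1 x2 x4 y1 y2 y4), (md x1 x2 x4 y1 y2 y4).
  split; auto.
  assert (K : forall v w, (br v x1 * br x2 x4 * (br w y4 * br y2 y1) - br v x4 * br x2 x1 * (br w y1 * br y2 y4)) = 0 ->
     mobius_app (ma x1 x2 x4 y1 y2 y4) (mb x1 x2 x4 y1 y2 y4) (mc x1 x2 x4 y1 y2 y4) (md x1 x2 x4 y1 y2 y4) v = w).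
  { intros v w Z. apply br_eq0. destruct (m_br x1 x2 x4 y1 y2 y4 v w H) as (k & _ & ->).
    rewrite Z. ring. }
  repeat split; apply K.
  - unfold br; ring.
  - unfold br; ring.
  - transitivity ((lam x1 x2 x3 x4 - lam y1 y2 y3 y4) * (br x2 x1 * br x4 x3 * br y2 y1 * br y4 y3)).
    + unfold lam. field_simplify_eq; [unfold br; ring | nz].
    + rewrite E. ring.
  - unfold br; ring.
Qed.

Lemma lam_c2 q1 q2 q3 q4 : distinct4 q1 q2 q3 q4 -> lam q2 q3 q1 q4 = psi (lam q1 q2 q3 q4).
Proof.
  intro D. unfold psi. rewrite one_minus_lam by auto. destruct D as (?&?&?&?&?&?). brnz.
  unfold lam. field_simplify_eq; [unfold br; ring | nz].
Qed.

Lemma one_minus_inv_lam q1 q2 q3 q4 : distinct4 q1 q2 q3 q4 ->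
  1 - / lam q1 q2 q3 q4 = - (1 - lam q1 q2 q3 q4) / lam q1 q2 q3 q4.
Proof. intro D. assert (L := lam_neq0 _ _ _ _ D). field. auto. Qed.

Lemma lam_c3 q1 q2 q3 q4 : distinct4 q1 q2 q3 q4 -> lam q3 q1 q2 q4 = 1 - / lam q1 q2 q3 q4.
Proof.
  intro D. rewrite one_minus_inv_lam, one_minus_lam by auto. destruct D as (?&?&?&?&?&?). brnz.
  unfold lam. field_simplify_eq; [unfold br; ring | nz].
Qed.

Lemma lam_c6 q1 q2 q3 q4 : distinct4 q1 q2 q3 q4 -> lam q3 q2 q1 q4 = psi (/ lam q1 q2 q3 q4).
Proof.
  intro D. unfold psi. rewrite one_minus_inv_lam, one_minus_lam by auto. destruct D as (?&?&?&?&?&?). brnz.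
  unfold lam. field_simplify_eq; [unfold br; ring | nz].
Qed.

Lemma assemble a b c d p1 p2 p3 p4 y1 y2 y3 y4 q1 q2 q3 q4 :
  a * d - b * c <> 0 ->
  mobius_app a b c d p1 = y1 -> mobius_app a b c d p2 = y2 ->
  mobius_app a b c d p3 = y3 -> mobius_app a b c d p4 = y4 ->
  (forall z, In z [y1; y2; y3; y4] <-> In z [q1; q2; q3; q4]) ->
  mobius_equivalent [p1; p2; p3; p4] [q1; q2; q3; q4].
Proof.
  intros H E1 E2 E3 E4 P. subst y1 y2 y3 y4. exists a, b, c, d. split; auto. split.
  - intros x Hx. apply P. simpl in Hx |- *.
    destruct Hx as [<-|[<-|[<-|[<-|[]]]]]; tauto.
  - intros y Hy. apply P in Hy. simpl in Hy.
    destruct Hy as [<-|[<-|[<-|[<-|[]]]]].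
    + exists p1; simpl; tauto.
    + exists p2; simpl; tauto.
    + exists p3; simpl; tauto.
    + exists p4; simpl; tauto.
Qed.

Lemma distinct_perm_ok q1 q2 q3 q4 : distinct4 q1 q2 q3 q4 ->
  distinct4 q2 q3 q1 q4 /\ distinct4 q3 q1 q2 q4 /\ distinct4 q1 q3 q2 q4 /\
  distinct4 q2 q1 q3 q4 /\ distinct4 q3 q2 q1 q4.
Proof. intros (?&?&?&?&?&?). repeat split; auto. Qed.

Theorem theorem1p6 (p1 p2 p3 p4 q1 q2 q3 q4 : sphere) :
  general_position4 p1 p2 p3 p4 ->
  general_position4 q1 q2 q3 q4 ->
  (mobius_equivalent [p1; p2; p3; p4] [q1; q2; q3; q4] <->
   cyclic_eq (shape_angles p1 p2 p3 p4) (shape_angles q1 q2 q3 q4)).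
Proof.
  intros GP GQ.
  assert (Ip := gp_Im _ _ _ _ GP). assert (Iq := gp_Im _ _ _ _ GQ).
  assert (Dp := nodup_distinct _ _ _ _ (proj1 GP)).
  assert (Dq := nodup_distinct _ _ _ _ (proj1 GQ)).
  rewrite (shape_G _ _ _ _ Dp), (shape_G _ _ _ _ Dq).
  split.
  - intros (a & b & c & d & H & _ & S).
    destruct (S q1 ltac:(simpl; tauto)) as (x1 & I1 & E1).
    destruct (S q2 ltac:(simpl; tauto)) as (x2 & I2 & E2).
    destruct (S q3 ltac:(simpl; tauto)) as (x3 & I3 & E3).
    destruct (S q4 ltac:(simpl; tauto)) as (x4 & I4 & E4).
    assert (Dx : distinct4 x1 x2 x3 x4).
    { destruct Dq as (?&?&?&?&?&?). repeat split; intro Z; subst; congruence. }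
    subst q1 q2 q3 q4. rewrite lam_mob by auto.
    now apply fwd_core.
  - intro C. apply orbit in C; auto.
    destruct (distinct_perm_ok _ _ _ _ Dq) as (D2 & D3 & D4 & D5 & D6).
    destruct C as [C|[C|[C|[C|[C|C]]]]].
    + destruct (build _ _ _ _ _ _ _ _ Dp Dq C) as (a&b&c&d&H&E1&E2&E3&E4).
      eapply (assemble a b c d); eauto. simpl; tauto.
    + rewrite <- lam_c2 in C by auto.
      destruct (build _ _ _ _ _ _ _ _ Dp D2 C) as (a&b&c&d&H&E1&E2&E3&E4).
      eapply (assemble a b c d); eauto. simpl; tauto.
    + rewrite <- lam_c3 in C by auto.
      destruct (build _ _ _ _ _ _ _ _ Dp D3 C) as (a&b&c&d&H&E1&E2&E3&E4).
      eapply (assemble a b c d); eauto. simpl; tauto.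
    + rewrite <- lam_s23 in C by auto.
      destruct (build _ _ _ _ _ _ _ _ Dp D4 C) as (a&b&c&d&H&E1&E2&E3&E4).
      eapply (assemble a b c d); eauto. simpl; tauto.
    + rewrite <- lam_s12 in C by auto.
      destruct (build _ _ _ _ _ _ _ _ Dp D5 C) as (a&b&c&d&H&E1&E2&E3&E4).
      eapply (assemble a b c d); eauto. simpl; tauto.
    + rewrite <- lam_c6 in C by auto.
      destruct (build _ _ _ _ _ _ _ _ Dp D6 C) as (a&b&c&d&H&E1&E2&E3&E4).
      eapply (assemble a b c d); eauto. simpl; tauto.
Qed.
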